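(* Let $X,Y$ be normed spaces over $K$ and $M>0$. The set $B^M(X,Y)$ of all topology bounded $M$-contraction operators from $X$ into $Y$ is a subset of $B(X,Y)$ and is closed in the normed space $(B(X,Y),\|\cdot\|_{B(X,Y)})$.
   Context: $K$ is $\mathbb{R}$ or $\mathbb{C}$; normed spaces are nontrivial; operators are arbitrary maps. $\|F\|_{B(X,Y)}=\max\left(\sup_{x\neq 0,x\in X}\frac{\|F(x)\|_Y}{\|x\|_X},\ \|F(0)\|_Y\right)$ and $B(X,Y)$ is the set of maps $F:X\to Y$ for which this is finite; it is a normed space under pointwise operations with norm $\|\cdot\|_{B(X,Y)}$. A map $F$ is topology bounded if it maps bounded sets of $X$ to bounded sets of $Y$. $F$ is an $M$-contraction operator if $\|F(kx)\|_Y\le M|k|\,\|F(x)\|_Y$ for every scalar $k\neq0$ and every $x\neq 0$. *)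

(* Defs.v *)
From HB Require Import structures.
From mathcomp Require Import all_boot all_order all_algebra.
From mathcomp Require Import all_classical all_reals all_analysis.
Set Implicit Arguments. Unset Strict Implicit. Unset Printing Implicit Defensive.
Import Order.TTheory GRing.Theory Num.Theory.
Import numFieldNormedType.Exports.
Local Open Scope classical_set_scope.
Local Open Scope ring_scope.

Section BDefs.
Context {K : numFieldType} {X Y : normedModType K}.

(** ||F||_{B(X,Y)} <= c, i.e. max(sup_{x<>0} ||F x||/||x||, ||F 0||) <= c *)
Definition Bnorm_le (F : X -> Y) (c : K) : Prop :=
  (forall x : X, x != 0 -> `|F x| / `|x| <= c) /\ `|F 0| <= c.

Definition inB (F : X -> Y) : Prop := exists c : K, Bnorm_le F c.

Definition topology_bounded (F : X -> Y) : Prop :=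
  forall A : set X, [bounded x | x in A] -> [bounded y | y in F @` A].

Definition M_contraction (M : K) (F : X -> Y) : Prop :=
  forall (k : K) (x : X), k != 0 -> x != 0 ->
    `|F (k *: x)| <= M * `|k| * `|F x|.

Definition BM (M : K) : set (X -> Y) :=
  [set F | topology_bounded F /\ M_contraction M F].

Definition closed_in_B (S : set (X -> Y)) : Prop :=
  forall F : X -> Y, inB F ->
    (forall e : K, 0 < e -> exists2 G, S G & Bnorm_le (F - G) e) -> S F.

End BDefs.

(* Main.v *)
Require Import Defs.
From HB Require Import structures.
From mathcomp Require Import all_boot all_order all_algebra.
From mathcomp Require Import all_classical all_reals all_analysis.
From mathcomp Require Import ring.
Import Order.TTheory GRing.Theory Num.Theory.
Import numFieldNormedType.Exports.
Local Open Scope classical_set_scope.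
Local Open Scope ring_scope.

Lemma bnd_of (K : numFieldType) (Y : normedModType K) (B : set Y) (C : K) :
  0 <= C -> (forall y, B y -> `|y| <= C) -> [bounded y | y in B].
Proof.
move=> C0 HB; rewrite /bounded_near.
have Cr : C \is Num.real by apply: ger0_real.
apply: filterS (nbhs_pinfty_ge Cr) => M CM y By.
exact: le_trans (HB _ By) CM.
Qed.

Lemma bnd_get (K : numFieldType) (Y : normedModType K) (B : set Y) :
  [bounded y | y in B] -> exists2 C, 0 < C & forall y, B y -> `|y| <= C.
Proof.
rewrite /bounded_near => /pinfty_ex_gt0 [C C0 HC].
by exists C.
Qed.

Theorem theorem2 (K : numFieldType) (X Y : normedModType K)
  (ntX : exists x : X, x != 0) (ntY : exists y : Y, y != 0)
  (M : K) (M_gt0 : 0 < M) :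
  (forall F : X -> Y, BM M F -> inB F) /\ closed_in_B (@BM K X Y M).
Proof.
split.
  move=> F [tb ctr].
  have [C C0 HC] : exists2 C, 0 < C & forall y, (F @` [set x : X | `|x| <= 1]) y -> `|y| <= C.
    apply: bnd_get; apply: tb; apply: (@bnd_of K X _ 1) => //.
  exists (M * C + C); split; last first.
    apply: (le_trans (_ : _ <= C)); last by rewrite lerDr mulr_ge0 ?ltW.
    by apply: HC; exists 0 => //=; rewrite normr0.
  move=> x x0.
  have nx : 0 < `|x| by rewrite normr_gt0.
  have hh : M * C * `|x| <= (M * C + C) * `|x|.
    by apply: ler_wpM2r; [exact: ltW | rewrite lerDl ltW].
  rewrite ler_pdivrMr //; apply: (le_trans _ hh).
  set u := `|x|^-1 *: x.
  have xu : x = `|x| *: u by rewrite /u scalerA divff ?gt_eqF // scale1r.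
  have nu : `|u| = 1 by rewrite /u normrZ normfV normr_id mulVf ?gt_eqF.
  have u0 : u != 0 by rewrite -normr_eq0 nu oner_neq0.
  have := ctr `|x| u (lt0r_neq0 nx) u0; rewrite -xu => h.
  apply: (le_trans h).
  rewrite ger0_norm ?normr_ge0 // mulrAC.
  apply: ler_wpM2r; first exact: ltW.
  apply: ler_wpM2l; first exact: ltW.
  by apply: HC; exists u => //; rewrite /= nu.
move=> F [c [Hc Hc0]] Happ; split.
  have c0 : 0 <= c by apply: le_trans (normr_ge0 _) Hc0.
  move=> A /bnd_get [r r0 Hr].
  apply: (@bnd_of K Y _ (c * r + c)).
    by rewrite addr_ge0 // mulr_ge0 // ltW.
  move=> _ [x Ax <-].
  have [->|x0] := eqVneq x 0.
    by apply: le_trans Hc0 _; rewrite lerDr mulr_ge0 // ltW.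
  have := Hc x x0; rewrite ler_pdivrMr ?normr_gt0 // => h.
  apply: (le_trans h).
  have h2 : c * `|x| <= c * r by apply: ler_wpM2l => //; apply: Hr.
  by apply: (le_trans h2); rewrite lerDl.
move=> k x k0 x0.
have nk : 0 < `|k| by rewrite normr_gt0.
have nx : 0 < `|x| by rewrite normr_gt0.
have kx0 : k *: x != 0 by rewrite scaler_eq0 negb_or k0 x0.
set D := `|k| * `|x| * (M + 1).
have D0 : 0 < D by rewrite !mulr_gt0 // addr_gt0.
apply/ler_addgt0Pr => e e0.
have [G [_ cG] HG] := Happ (e / D) (divr_gt0 e0 D0).
case: HG => HG _.
have h1 := HG _ kx0; have h2 := HG _ x0.
rewrite ler_pdivrMr ?normr_gt0 // in h1.
rewrite ler_pdivrMr ?normr_gt0 // in h2.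
rewrite /= in h1 h2.
have g1 := cG k x k0 x0.
set d := e / D.
have dD : d * D = e by rewrite /d divfK // lt0r_neq0.
have d0 : 0 <= d by rewrite ltW // divr_gt0.
have h1' : `|F (k *: x) - G (k *: x)| <= d * (`|k| * `|x|) by rewrite -normrZ.
have t1 : `|F (k *: x)| <= `|G (k *: x)| + `|F (k *: x) - G (k *: x)|.
  by have := ler_normD (G (k *: x)) (F (k *: x) - G (k *: x)); rewrite addrC subrK.
have t2 : `|G x| <= `|F x| + `|F x - G x|.
  have e1 : F x - (F x - G x) = G x by rewrite opprB addrC subrK.
  by have := ler_normB (F x) (F x - G x); rewrite e1.
have s1 : `|F (k *: x)| <= M * `|k| * `|G x| + d * (`|k| * `|x|).
  apply: (le_trans t1); exact: lerD.
have s2 : M * `|k| * `|G x| <= M * `|k| * (`|F x| + d * `|x|).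
  apply: ler_wpM2l; first by rewrite mulr_ge0 // ltW.
  apply: (le_trans t2); exact: lerD.
have s3 : M * `|k| * (`|F x| + d * `|x|) + d * (`|k| * `|x|) = M * `|k| * `|F x| + d * D.
  rewrite /D; ring.
rewrite -dD -s3; apply: (le_trans s1); exact: lerD.
Qed.
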